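(* In a game with incomplete information as described in the context, let $f$ be a pure strategy profile ($f_i$ $\mathcal T_i$-measurable for each $i$) and $g$ a mixed strategy profile with each $g_i:T_i\to\mathcal M(A_i)$ being $\mathcal F_i$-measurable. If $f$ and $g$ are universally distribution equivalent, then $f$ is belief consistent with $g$, i.e. for every $i\in I$, $f_i(t_i)\in\operatorname{supp} g_i(t_i)$ for $\lambda_i$-almost all $t_i\in T_i$.
   Context: Players $I=\{1,\dots,n\}$; each $A_i$ is a compact metric space with Borel $\sigma$-algebra $\mathcal B(A_i)$; each $(T_i,\mathcal T_i,\lambda_i)$ is an atomless probability space with $\lambda_i$ complete and countably additive; $\mathcal F_i\subseteq\mathcal T_i$ is a countably generated sub-$\sigma$-algebra. $\mathcal M(A_i)$ denotes the space of Borel probability measures on $A_i$ with the topology of weak convergence, and $\operatorname{supp}\mu$ the support of $\mu\in\mathcal M(A_i)$. A mixed strategy of $i$ is a measurable map $g_i:T_i\to\mathcal M(A_i)$ (write $g_i(t_i,\cdot)$ for the measure); a pure strategy is a measurable map $f_i:T_i\to A_i$, identified with $t_i\mapsto\delta_{f_i(t_i)}$. Strategy profiles $f,g$ are universally distribution equivalent if for every $i\in I$ and every $E\in\mathcal F_i$, $\int_E f_i(t_i,\cdot)\,\mathrm d\lambda_i(t_i)=\int_E g_i(t_i,\cdot)\,\mathrm d\lambda_i(t_i)$ as measures on $A_i$; for a pure $f_i$ this means $\lambda_i(E\cap f_i^{-1}(B))=\int_E g_i(t_i,B)\,\mathrm d\lambda_i(t_i)$ for all Borel $B\subseteq A_i$.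 *)

(* Defs.v *)
From HB Require Import structures.
From mathcomp Require Import all_boot all_order all_algebra.
From mathcomp Require Import all_classical all_reals all_analysis.
From mathcomp Require Import measurable_realfun.
Set Implicit Arguments. Unset Strict Implicit. Unset Printing Implicit Defensive.
Import Order.TTheory GRing.Theory Num.Theory.
Local Open Scope classical_set_scope.
Local Open Scope ring_scope.

Definition borel (A : ptopologicalType) := g_sigma_algebraType (@open A).

Definition supp (R : realType) (A : ptopologicalType)
  (mu : set (borel A) -> \bar R) : set A :=
  [set a : A | forall U : set A, open U -> U a -> (0 < mu U)%E].

Definition atomless d (T : measurableType d) (R : realType)
  (mu : set T -> \bar R) :=
  forall E : set T, measurable E -> (0 < mu E)%E ->
    exists F : set T, [/\ measurable F, F `<=` E, (0 < mu F)%E & (mu F < mu E)%E].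

Definition countably_generated_sub_sigma d (T : measurableType d)
  (F : set (set T)) :=
  [/\ sigma_algebra setT F, F `<=` measurable &
      exists G : set (set T), countable G /\ F = <<s G >>].

Definition measurable_wrt (T : Type) (R : realType) (F : set (set T))
  (h : T -> \bar R) :=
  forall Y : set (\bar R), measurable Y -> F (h @^-1` Y).

(* Main.v *)
Require Import Defs.
From HB Require Import structures.
From mathcomp Require Import all_boot all_order all_algebra.
From mathcomp Require Import all_classical all_reals all_analysis.
From mathcomp Require Import measurable_realfun.
Import Order.TTheory GRing.Theory Num.Theory.
Local Open Scope classical_set_scope.
Local Open Scope ring_scope.

Theorem proposition3 (R : realType) (n : nat)
  (A : 'I_n -> pseudoPMetricType R)
  (hA : forall i, hausdorff_space (A i) /\ compact [set: A i])
  (d : 'I_n -> measure_display) (T : forall i, measurableType (d i))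
  (lam : forall i, probability (T i) R)
  (hlam : forall i, measure_is_complete (lam i) /\ atomless (lam i))
  (F : forall i, set (set (T i)))
  (hF : forall i, countably_generated_sub_sigma (F i))
  (f : forall i, T i -> A i)
  (hf : forall i, measurable_fun setT (f i : T i -> borel (A i)))
  (g : forall i, T i -> probability (borel (A i)) R)
  (hg : forall i (B : set (borel (A i))), measurable B ->
          measurable_wrt (F i) (fun t => g i t B))
  (hequiv : forall i (E : set (T i)), F i E ->
      forall B : set (borel (A i)), measurable B ->
        lam i (E `&` (f i @^-1` B)) = (\int[lam i]_(t in E) g i t B)%E) :
  forall i, {ae lam i, forall t, supp (g i t) (f i t)}.
Proof.
move=> i.
have [_ Acpt] := hA i.
have [B Bc [Bop Bbase]] := compact_second_countable Acpt.
pose bad (U : set (A i)) := [set t | g i t U = 0%E] `&` (f i @^-1` U).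
have mU U : B U -> measurable (U : set (borel (A i))).
  by move=> BU; apply: sub_sigma_algebra; exact: Bop.
have badN U : B U -> (lam i).-negligible (bad U).
  move=> BU.
  have FE : F i [set t | g i t U = 0%E].
    exact: (hg i U (mU U BU) _ (emeasurable_set1 0%E)).
  have [_ Fm _] := hF i.
  have mf : measurable (f i @^-1` U).
    by have := hf i measurableT _ (mU U BU); rewrite setTI.
  exists (bad U); split => //.
    by apply: measurableI => //; exact: Fm.
  rewrite /bad (hequiv i _ FE U (mU U BU)).
  by apply: integral0_eq => t.
have [h hinj] := countable_injP _ Bc.
pose Fk (k : nat) := [set t | exists V, [/\ B V, h V = k & bad V t]].
have FkN k : (lam i).-negligible (Fk k).
  case: (pselect (exists V, B V /\ h V = k)) => [[V0 [BV0 hV0]]|nV].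
    apply: (negligibleS _ (badN V0 BV0)) => t [V [BV hV bV]].
    have -> : V0 = V by apply: hinj; rewrite ?inE // hV0 hV.
    exact: bV.
  apply: (negligibleS _ (negligible_set0 (lam i))) => t [V [BV hV _]].
  by apply: nV; exists V.
apply: (negligibleS _ (negligible_bigcup FkN)) => t /= nsupp.
have : ~ (forall U : set (A i), open U -> U (f i t) -> (0 < g i t U)%E) by [].
move=> /existsNP [U /not_implyP [oU /not_implyP [Uft /negP]]].
rewrite -leNgt => gU0.
have [V [BV Vft] VU] : filter_from [set V | B V /\ V (f i t)] id U.
  by apply: (Bbase (f i t)); apply: open_nbhs_nbhs.
exists (h V) => //; exists V; split => //; split => //.
apply/eqP; rewrite eq_le measure_ge0 andbT.
apply: le_trans gU0.
by apply: le_measure => //; rewrite inE; [exact: mU | apply: sub_sigma_algebra].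
Qed.
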